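(* Let $E$ and $F$ be Banach spaces and let $T:E\to F$ be a coarse $(M,L)$-quasi isometry, with $\xi>0$ such that $T(E)$ is $\xi$-dense in $F$. Then there exists a bijective coarse $\big(M,(4M^2+3)L+4\xi\big)$-quasi isometry $\widetilde{T}:E\to F$ such that $\|\widetilde{T}x-Tx\|\le(2M^2+2)L+2\xi$ for all $x\in E$.
   Context: A set $S$ is $\xi$-dense in $F$ if every point of $F$ is at distance at most $\xi$ from some point of $S$. A map $T:E\to F$ between metric spaces is a coarse $(M,L)$-quasi isometry (with $M>0$, $L\ge0$) if $\frac{1}{M}d_E(x,y)-L\le d_F(Tx,Ty)\le M d_E(x,y)+L$ for all $x,y\in E$ and $T(E)$ is $\xi'$-dense in $F$ for some $\xi'>0$. *)

(* Defs.v *)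
From HB Require Import structures.
From mathcomp Require Import all_boot all_order all_algebra.
From mathcomp Require Import all_classical all_reals all_analysis.
Set Implicit Arguments. Unset Strict Implicit. Unset Printing Implicit Defensive.
Import Order.TTheory GRing.Theory Num.Theory.
Import numFieldNormedType.Exports.
Local Open Scope classical_set_scope.
Local Open Scope ring_scope.

Definition xi_dense (R : realType) (F : normedModType R) (S : set F) (xi : R) : Prop :=
  forall y : F, exists2 s : F, S s & `|y - s| <= xi.

Definition coarse_QI (R : realType) (E F : normedModType R) (T : E -> F) (M L : R) : Prop :=
  [/\ 0 < M, 0 <= L,
      (forall x y : E, M^-1 * `|x - y| - L <= `|T x - T y| /\
                       `|T x - T y| <= M * `|x - y| + L)
    & exists2 xi' : R, 0 < xi' & xi_dense (range T) xi'].

(* Main.v *)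
Require Import Defs.
From HB Require Import structures.
From mathcomp Require Import all_boot all_order all_algebra.
From mathcomp Require Import all_classical all_reals all_analysis.
Import Order.TTheory GRing.Theory Num.Theory.
Import numFieldNormedType.Exports.
Local Open Scope classical_set_scope.
Local Open Scope ring_scope.
From mathcomp Require Import ring lra.

Lemma real_key (R : realType) (X s a b : R) : 0 < s -> s <= 1 -> 0 < a -> a <= 1 ->
  0 < b -> b <= 1 -> s * a * b <= X -> a - b <= X -> b - a <= X ->
  2 * (s * a ^+ 2 / 16) + 2 * (s * b ^+ 2 / 16) < X.
Proof.
move=> s0 s1 a0 a1 b0 b1 h1 h2 h3.
wlog ab : a b a0 a1 b0 b1 h1 h2 h3 / b <= a.
  move=> W; have [ba|/ltW ab] := leP b a; first exact: W.
  rewrite addrC; apply: W => //; by rewrite mulrAC.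
have [hb|hb] := leP (a / 2) b.
  apply: lt_le_trans h1.
  have : s * a * (a / 2) <= s * a * b by rewrite ler_pM2l ?mulr_gt0.
  have : s * b ^+ 2 <= s * a ^+ 2 by rewrite ler_pM2l // lerXn2r // ?nnegrE ltW.
  have : 0 < s * a ^+ 2 by rewrite mulr_gt0 // exprn_gt0.
  rewrite !expr2; nra.
apply: lt_le_trans h2.
have : s * b ^+ 2 <= s * a ^+ 2 by rewrite ler_pM2l // lerXn2r // ?nnegrE ltW.
have : s * a ^+ 2 <= a by rewrite expr2; nra.
rewrite !expr2; nra.
Qed.
Lemma u_sep (R : realType) (V : normedModType R) (p q : V) :
  `|p - q| <= `|(1 + `|p|)^-1 *: p - (1 + `|q|)^-1 *: q| * ((1 + `|p|) * (1 + `|q|)).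
Proof.
set a := 1 + `|p|; set b := 1 + `|q|.
have a0 : 0 < a by rewrite /a ltr_pwDl.
have b0 : 0 < b by rewrite /b ltr_pwDl.
have key : (a * b) *: (a^-1 *: p - b^-1 *: q) = b *: (p - q) + (`|q| - `|p|) *: q.
  rewrite scalerBr !scalerA.
  have -> : a * b * a^-1 = b by rewrite mulrAC mulfV ?gt_eqF // mul1r.
  have -> : a * b * b^-1 = a by rewrite -mulrA mulfV ?gt_eqF // mulr1.
  rewrite scalerBr scalerBl /a /b !scalerDl !scale1r; rewrite addrC.
  set x := `|p| *: q; set y := `|q| *: q.
  by rewrite [LHS]addrC !opprD !addrA subrK.
have h : `|(a * b) *: (a^-1 *: p - b^-1 *: q)| = `|a^-1 *: p - b^-1 *: q| * (a * b).
  by rewrite normrZ mulrC gtr0_norm // mulr_gt0.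
rewrite -h key.
have h1 := lerB_normD (b *: (p - q)) ((`|q| - `|p|) *: q).
rewrite !normrZ (gtr0_norm b0) in h1.
have h2 : `| `|q| - `|p| | * `|q| <= `|p - q| * `|q|.
  by rewrite ler_wpM2r // distrC ler_dist_dist.
apply: le_trans h1.
rewrite /b; nra.
Qed.

Fixpoint ccoef (R : realType) (X : Type) (d : X -> R) (a : nat -> X) (n : nat) : R :=
  match n with 0%N => 1 | m.+1 => ccoef R X d a m * d (a m) end.

Lemma code_inj (R : realType) (X : completeNormedModType R) (P : set X) (s : R) :
  0 < s -> (forall p q, P p -> P q -> p <> q -> s <= `|p - q|) ->
  exists Phi : (nat -> X) -> X, forall a b, (forall k, P (a k)) -> (forall k, P (b k)) ->
    Phi a = Phi b -> a = b.
Proof.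
move=> s0 sep.
set s1 := Num.min s 1.
have s10 : 0 < s1 by rewrite lt_min s0 ltr01.
have s11 : s1 <= 1 by rewrite ge_min lexx orbT.
have s1s : s1 <= s by rewrite ge_min lexx.
pose pi (p : X) := (1 + `|p|)^-1.
pose u (p : X) := pi p *: p.
pose d (p : X) := s1 * pi p ^+ 2 / 16.
have pp0 (p : X) : 0 < 1 + `|p| by rewrite ltr_pwDl.
have pi0 p : 0 < pi p by rewrite invr_gt0.
have pi1 p : pi p <= 1 by rewrite invf_le1 // lerDl.
have d0 p : 0 < d p by rewrite /d !mulr_gt0 // exprn_gt0.
have d2 p : d p <= 2^-1.
  have : pi p ^+ 2 <= 1 by rewrite expr_le1 // ltW.
  have : 0 <= pi p ^+ 2 by rewrite exprn_ge0 // ltW.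
  rewrite /d; move: (pi p ^+ 2) => x x0 x1.
  nra.
have un p : `|u p| = 1 - pi p.
  rewrite /u normrZ gtr0_norm // /pi.
  have h := pp0 p; field; exact: lt0r_neq0.
have ukey p q : P p -> P q -> p <> q -> 2 * d p + 2 * d q < `|u p - u q|.
  move=> Pp Pq pq.
  apply: real_key => //.
  - have h := u_sep _ _ p q.
    have hs := sep _ _ Pp Pq pq.
    have : `|p - q| * (pi p * pi q) <= `|u p - u q|.
      rewrite -(ler_pM2r (mulr_gt0 (pp0 p) (pp0 q))) -mulrA.
      have -> : pi p * pi q * ((1 + `|p|) * (1 + `|q|)) = 1.
        by rewrite /pi mulrACA !mulVf ?gt_eqF // mulr1.
      by rewrite mulr1.
    apply: le_trans; rewrite -mulrA ler_pM2r ?mulr_gt0 //.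
    exact: le_trans hs.
  - have := lerB_dist (u q) (u p); rewrite !un distrC.
    move=> h; lra.
  - have := lerB_dist (u p) (u q); rewrite !un.
    move=> h; lra.
pose c (a : nat -> X) := ccoef _ _ d a.
pose t a m := c a m *: u (a m).
pose S a := series (t a).
have SS a m : S a m.+1 = S a m + t a m by rewrite /S seriesSr.
have c0 a n : 0 < c a n.
  by elim: n => [|n IH] /=; [exact: ltr01 | rewrite mulr_gt0].
have cS a n : 2 * c a n.+1 <= c a n.
  rewrite /c /= -/(c a n).
  have := d2 (a n); have := c0 a n; move: (c a n) (d (a n)) => x y x0 y2; nra.
have cg a n : c a n <= 1 * (2^-1) ^+ n.
  elim: n => [|n IH]; first by rewrite /= expr0 mulr1.
  rewrite exprS mul1r; have := cS a n; rewrite mul1r in IH; nra.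
have tn a n : `|t a n| <= c a n.
  rewrite /t normrZ gtr0_norm // un; have := pi0 (a n); have := c0 a n; nra.
have Scvg a : cvgn (S a).
  apply: normed_cvg.
  apply: (@series_le_cvg _ _ (geometric 1 (2^-1))).
  - by move=> n /=.
  - by move=> n; rewrite /= mul1r exprn_ge0.
  - move=> n; apply: le_trans (tn a n) _; exact: cg.
  by apply: is_cvg_geometric_series; rewrite gtr0_norm // invf_lt1 // ltr1n.
exists (fun a => lim (S a @ \oo)) => a b Pa Pb e.
apply: contrapT => nab.
have [k akbk kmin] : exists2 k, a k <> b k & forall m, (m < k)%N -> a m = b m.
  have ex : exists k, a k != b k.
    apply: contrapT => nex; apply: nab; apply: funext => k.
    by apply/eqP; apply: contrapT => /negP h; apply: nex; exists k.
  case: (ex_minnP ex) => k /eqP akbk kmin; exists k => // m mk.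
  by case: (eqVneq (a m) (b m)) => // /kmin; rewrite leqNgt mk.
have cab m : (m <= k)%N -> c a m = c b m.
  elim: m => [|m IH] mk //=.
  rewrite /c /= -/(c a m) -/(c b m) IH ?(ltnW mk) // kmin //.
have Sab m : (m <= k)%N -> S a m = S b m.
  elim: m => [|m IH] mk; first by rewrite /S /series /= !big_geq.
  rewrite /S !seriesSr -/(S a) -/(S b) IH ?(ltnW mk) // /t cab ?(ltnW mk) // kmin //.
set W := c a k *: (u (a k) - u (b k)).
have inv j : `|S a (k.+1 + j)%N - S b (k.+1 + j)%N - W| + 2 * c a (k.+1 + j)%N + 2 * c b (k.+1 + j)%N
    <= 2 * c a k.+1 + 2 * c b k.+1.
  elim: j => [|j IH].
    rewrite addn0 /S !seriesSr -/(S a) -/(S b) Sab // /t -cab // /W scalerBr.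
    by rewrite opprD addrACA subrr add0r subrr normr0 add0r.
  have -> : (k.+1 + j.+1)%N = (k.+1 + j).+1 by rewrite addnS.
  set n := (k.+1 + j)%N in IH *.
  rewrite (SS a n) (SS b n).
  have h : S a n + t a n - (S b n + t b n) - W = (S a n - S b n - W) + (t a n - t b n).
    by rewrite opprD addrACA addrAC [RHS]addrAC (addrAC (S a n)).
  rewrite h; apply: le_trans IH.
  have := ler_normD (S a n - S b n - W) (t a n - t b n).
  have := ler_normB (t a n) (t b n).
  have := tn a n; have := tn b n; have := cS a n; have := cS b n.
  lra.
set beta := c a k * (`|u (a k) - u (b k)| - 2 * d (a k) - 2 * d (b k)).
have low n : (k.+1 <= n)%N -> beta <= `|S a n - S b n|.
  move=> kn; have := inv (n - k.+1)%N; rewrite subnKC //.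
  have ca1 : c a k.+1 = c a k * d (a k) by [].
  have cb1 : c b k.+1 = c a k * d (b k) by rewrite /c /= -/(c b k) -cab.
  rewrite ca1 cb1 => h.
  have h2 := ler_normB (S a n - S b n) (S a n - S b n - W).
  have e2 : S a n - S b n - (S a n - S b n - W) = W.
    by rewrite opprB addrC subrK.
  rewrite e2 in h2.
  have nW : `|W| = c a k * `|u (a k) - u (b k)| by rewrite normrZ gtr0_norm.
  rewrite nW in h2.
  have := c0 a n; have := c0 b n; rewrite /beta; lra.
have beta0 : 0 < beta.
  rewrite /beta mulr_gt0 //; have := ukey _ _ (Pa k) (Pb k) akbk; lra.
have lim0 : (fun n => `|S a n - S b n|) @ \oo --> `|lim (S a @ \oo) - lim (S b @ \oo)|.
  by apply: cvg_norm; exact: cvgB (Scvg a) (Scvg b).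
have := cvgr_to_ge lim0 (b := beta).
rewrite e subrr normr0 => h.
suff : beta <= 0 by lra.
apply: h; exists k.+1 => // n /= kn; exact: low.
Qed.
Lemma SB (X Y : Type) (f : X -> Y) (g : Y -> X) : injective f -> injective g ->
  exists h : X -> Y, bijective h /\ forall x, h x = f x \/ g (h x) = x.
Proof.
move=> fI gI.
pose C x := exists n x0, ~ (exists y, g y = x0) /\ x = iter n (fun z => g (f z)) x0.
have /choice[gi giP] : forall x, exists y, (exists y', g y' = x) -> g y = x.
  move=> x; have [[y gy]|ng] := pselect (exists y, g y = x).
    by exists y.
  by exists (f x) => /ng.
pose h x := if pselect (C x) then f x else gi x.
have hP x : h x = f x \/ g (h x) = x.
  rewrite /h; case: pselect => Cx; first by left.
  right; apply: giP; apply: contrapT => ng; apply: Cx; by exists 0%N, x.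
have hI : injective h.
  have mix x x' : C x -> ~ C x' -> f x = gi x' -> False.
    move=> [n [x0 [nx0 ->]]] nC e.
    have gx' : g (gi x') = x'.
      apply: giP; apply: contrapT => ng; apply: (nC); by exists 0%N, x'.
    apply: nC.
    exists n.+1, x0; split => //; by rewrite iterS e gx'.
  move=> x x'; rewrite /h; case: pselect => Cx; case: pselect => Cx' /=.
  - exact: fI.
  - by move=> e; case: (mix _ _ Cx Cx' e).
  - by move=> e; case: (mix _ _ Cx' Cx (esym e)).
  - move=> e.
    have gx : g (gi x) = x by apply: giP; apply: contrapT => ng; apply: (Cx); exists 0%N, x.
    have gx' : g (gi x') = x' by apply: giP; apply: contrapT => ng; apply: (Cx'); exists 0%N, x'.
    by rewrite -gx -gx' e.
have hS y : exists x, h x = y.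
  have [[n [x0 [nx0 e]]]|nC] := pselect (C (g y)).
    case: n e => [|n] /= e; first by case: nx0; exists y.
    have e' := gI _ _ e.
    exists (iter n (fun z => g (f z)) x0); rewrite /h; case: pselect => [_|nc] /=; first by rewrite e'.
    by exfalso; apply: nc; exists n, x0.
  exists (g y); rewrite /h; case: pselect => //= _.
  by apply: gI; apply: giP; exists y.
have [hi hiP] := choice hS.
exists h; split => //; exists hi => [x|y]; last exact: hiP.
by apply: hI; rewrite hiP.
Qed.

Lemma net_inj (R : realType) (Y : normedModType R) (P : set Y) (rho : R) :
  (forall y, exists2 p, P p & `|y - p| <= rho) ->
  exists c : Y -> nat -> Y, (forall y k, P (c y k)) /\ injective c.
Proof.
move=> cov.
have /choice[pk pkP] : forall y : Y, exists p, P p /\ `|y - p| <= rho.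
  by move=> y; have [p Pp h] := cov y; exists p.
exists (fun y k => pk (k.+1%:R *: y)); split; first by move=> y k; case: (pkP (k.+1%:R *: y)).
move=> y z e.
have bnd k : k.+1%:R * `|y - z| <= 2 * rho.
  have ek := congr1 (fun f => f k) e; rewrite /= in ek.
  have [_ h1] := pkP (k.+1%:R *: y); have [_ h2] := pkP (k.+1%:R *: z).
  rewrite ek in h1.
  have := ler_distD (pk (k.+1%:R *: z)) (k.+1%:R *: y) (k.+1%:R *: z).
  rewrite -scalerBr normrZ ger0_norm ?ler0n // (distrC (pk _)).
  lra.
apply/eqP; rewrite -subr_eq0 -normr_eq0; apply/eqP.
set D := `|y - z|.
have D0 : 0 <= D by exact: normr_ge0.
suff : D <= 0 by move=> h; apply: le_anti; rewrite h D0.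
rewrite leNgt; apply/negP => Dp.
have x0 : 0 <= `|2 * rho| / D by rewrite divr_ge0.
have hB := archi_boundP x0.
set B := Num.Def.archi_bound _ in hB.
have hb := bnd B.
rewrite ltr_pdivrMr // in hB.
have hn : 2 * rho <= `|2 * rho| by exact: ler_norm.
rewrite -[B.+1]addn1 natrD mulrDl mul1r -/D in hb.
clear e bnd cov pkP; lra.
Qed.

Lemma squash_inj (R : realType) (V : normedModType R) (r : R) : 0 < r ->
  exists f : V -> V, injective f /\ forall y, `|f y| <= r.
Proof.
move=> r0.
have pp0 (p : V) : 0 < 1 + `|p| by rewrite ltr_pwDl.
exists (fun y => (r * (1 + `|y|)^-1) *: y); split.
  move=> y z e.
  have e' : (1 + `|y|)^-1 *: y = (1 + `|z|)^-1 *: z.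
    by apply: (scalerI (lt0r_neq0 r0)); rewrite !scalerA.
  have := u_sep _ _ y z; rewrite e' subrr normr0 mul0r => h.
  by apply/eqP; rewrite -subr_eq0 -normr_eq0 eq_le h normr_ge0.
move=> y; rewrite normrZ gtr0_norm ?mulr_gt0 ?invr_gt0 //.
rewrite mulrAC ler_pdivrMr //; have := normr_ge0 y; nra.
Qed.

Lemma max_net (R : realType) (E F : normedModType R) (T : E -> F) (s : R) : 0 < s ->
  exists A : set E, (forall a b, A a -> A b -> a <> b -> s <= `|T a - T b|) /\
    (forall x, exists2 a, A a & `|T x - T a| < s).
Proof.
move=> s0.
pose P (A : set E) := forall a b, A a -> A b -> a <> b -> s <= `|T a - T b|.
have [|A [PA Amax]] := @Zorn_bigcup E P.
  move=> G GP tot a b [X GX Xa] [Y GY Yb] ab.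
  have [XY|YX] := tot _ _ GX GY.
    exact: (GP _ GY) (XY _ Xa) Yb ab.
  exact: (GP _ GX) Xa (YX _ Yb) ab.
exists A; split => // x.
apply: contrapT => nx.
have nx' a : A a -> s <= `|T x - T a|.
  move=> Aa; rewrite leNgt; apply/negP => h; apply: nx; by exists a.
have xA : ~ A x.
  move=> Ax; have := nx' _ Ax; rewrite subrr normr0; lra.
apply: (Amax (A `|` [set x])).
  split; first by move=> y Ay; left.
  by move=> h; apply: xA; apply: h; right.
move=> a b [Aa|->] [Ab|->] ab.
- exact: PA.
- by rewrite distrC; apply: nx'.
- exact: nx'.
- by case: ab.
Qed.

Theorem fact3 (R : realType) (E F : completeNormedModType R) (T : E -> F) (M L xi : R) :
  coarse_QI T M L -> 0 < xi -> xi_dense (range T) xi ->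
  exists Tt : E -> F,
    [/\ bijective Tt,
        coarse_QI Tt M ((4 * M ^+ 2 + 3) * L + 4 * xi)
      & forall x : E, `|Tt x - T x| <= (2 * M ^+ 2 + 2) * L + 2 * xi].
Proof.
move=> [M0 L0 qi _] xi0 dense.
have hM2 := sqr_ge0 M.
have K0 : 0 <= (4 * M ^+ 2 + 3) * L + 4 * xi by nra.
case: (pselect (exists e : E, e <> 0)) => [[e e0]|triv]; last first.
  have E0 (x : E) : x = 0 by apply: contrapT => h; apply: triv; exists x.
  have F0 y : y = T 0.
    have [p [x _ <-] h] := dense y; rewrite (E0 x) in h.
    apply: contrapT => ne.
    have v0 : 0 < `|y - T 0| by rewrite normr_gt0 subr_eq0; apply/eqP.
    have [p' [x' _ <-] h'] := dense (T 0 + ((xi + 1) / `|y - T 0|) *: (y - T 0)).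
    have c0 : 0 <= (xi + 1) / `|y - T 0| by rewrite divr_ge0 // ?addr_ge0 ?ltW.
    rewrite (E0 x') addrAC subrr add0r normrZ (ger0_norm c0) divfK ?lt0r_neq0 // in h'.
    lra.
  exists T; split.
  - by exists (fun _ => 0) => [x|y] /=; [exact: esym (E0 x) | exact: esym (F0 y)].
  - split => //.
      by move=> x y; rewrite (E0 x) (E0 y) !subrr !normr0 mulr0; split; lra.
    exists 1; first exact: ltr01.
    move=> y; exists y; first by exists 0 => //; exact: esym (F0 y).
    by rewrite subrr normr0 ler01.
  by move=> x; rewrite subrr normr0; nra.
have M1 : 1 <= M.
  rewrite leNgt; apply/negP => M1.
  set w := `|e|.
  have w0 : 0 < w by rewrite normr_gt0; apply/eqP.
  have m0 : 0 < M^-1 - M.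
    by rewrite subr_gt0; apply: lt_trans (M1) _; rewrite invf_gt1.
  set t := (2 * L + 1) / (w * (M^-1 - M)).
  have t0 : 0 <= t by rewrite divr_ge0 ?mulr_ge0 ?ltW //; lra.
  have ht : (M^-1 - M) * (t * w) = 2 * L + 1.
    rewrite /t; field; apply/and3P; split; [exact: lt0r_neq0 | apply/eqP => hh; nra | exact: lt0r_neq0].
  have [h1 h2] := qi (t *: e) 0.
  rewrite subr0 normrZ (ger0_norm t0) -/w in h1 h2.
  move: h1 h2 ht; set N := `|T (t *: e) - T 0|.
  clear -L0; move=> h1 h2 ht; lra.
set eta := xi / 2.
have eta0 : 0 < eta by rewrite divr_gt0.
set s := L + eta.
have s0 : 0 < s by rewrite /s; lra.
have [A [sepA covA]] := max_net _ _ _ T s s0.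
have hMM : M * M^-1 = 1 by rewrite mulfV // lt0r_neq0.
have sepE a b : A a -> A b -> a <> b -> eta / M <= `|a - b|.
  move=> Aa Ab ab; have := sepA _ _ Aa Ab ab; have [_ h] := qi a b.
  rewrite ler_pdivrMr //; rewrite /s; lra.
have covE x : exists2 a, A a & `|x - a| <= M * (s + L).
  have [a Aa h] := covA x; exists a => //; have [h1 _] := qi x a.
  have : M^-1 * `|x - a| <= s + L by lra.
  move=> h3; have := ler_wpM2l (ltW M0) h3.
  by rewrite mulrA hMM mul1r.
have covF y : exists2 p, (T @` A) p & `|y - p| <= xi + s.
  have [p [x _ <-] h] := dense y; have [a Aa h2] := covA x.
  exists (T a); first by exists a.
  have := ler_distD (T x) y (T a); lra.
have sepF p q : (T @` A) p -> (T @` A) q -> p <> q -> s <= `|p - q|.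
  move=> [a Aa <-] [b Ab <-] pq; apply: sepA => // ab; apply: pq; by rewrite ab.
have etaM0 : 0 < eta / M by rewrite divr_gt0.
have [cE [cEA cEI]] := net_inj _ _ _ _ covE.
have [PhiF PhiFI] := code_inj _ _ _ _ s0 sepF.
have [cF [cFA cFI]] := net_inj _ _ _ _ covF.
have /choice[pre preP] : forall p : F, exists x : E, (T @` A) p -> A x /\ T x = p.
  move=> p; case: (pselect ((T @` A) p)) => [[a Aa <-]|np]; first by exists a.
  by exists 0.
have [PhiE PhiEI] := code_inj _ _ _ _ etaM0 sepE.
have [sqF [sqFI sqFb]] := squash_inj _ F (eta / 4) (divr_gt0 eta0 (ltr0n _ 4)).
have M40 : 0 < eta / (4 * M) by rewrite divr_gt0 // mulr_gt0.
have [sqE [sqEI sqEb]] := squash_inj _ E (eta / (4 * M)) M40.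
pose phi x := sqF (PhiF (fun k => T (cE x k))).
pose psi y := sqE (PhiE (fun k => pre (cF y k))).
have Tinj a b : A a -> A b -> T a = T b -> a = b.
  move=> Aa Ab e1; apply: contrapT => ab; have := sepA _ _ Aa Ab ab.
  rewrite e1 subrr normr0; lra.
have phiI : injective phi.
  move=> x x' /sqFI e1.
  have hx z k : (T @` A) (T (cE z k)) by exists (cE z k).
  have e2 := PhiFI _ _ (hx x) (hx x') e1.
  apply: cEI; apply: funext => k.
  apply: Tinj; [exact: cEA | exact: cEA | exact: (congr1 (fun f => f k) e2)].
have psiI : injective psi.
  move=> y y' /sqEI e1.
  have hy z k : A (pre (cF z k)) by case: (preP (cF z k) (cFA z k)).
  have e2 := PhiEI _ _ (hy y) (hy y') e1.
  apply: cFI; apply: funext => k.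
  have := congr1 (fun f => T (f k)) e2; rewrite /=.
  by rewrite (preP _ (cFA y k)).2 (preP _ (cFA y' k)).2.
have /choice[bb bbP] : forall x : E, exists a, A a /\ `|T x - T a| < s.
  by move=> x; have [a Aa h] := covA x; exists a.
have /choice[aa aaP] : forall y : F, exists a, A a /\ `|y - T a| <= xi + s.
  by move=> y; have [p [a Aa <-] h] := covF y; exists a.
pose f x := T (bb x) + phi x.
pose g y := aa y + psi y.
have fI : injective f.
  move=> x x' e1; rewrite /f in e1.
  case: (pselect (bb x = bb x')) => bx.
    by apply: phiI; apply: (addrI (T (bb x))); rewrite e1 bx.
  have := sepA _ _ (bbP x).1 (bbP x').1 bx.
  have e3 : T (bb x) = T (bb x') + phi x' - phi x by rewrite -e1 addrK.
  rewrite e3 addrAC [T (bb x') + _]addrC addrK => hs; exfalso; clear e1 e3.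
  have := ler_normB (phi x') (phi x); have := sqFb (PhiF (fun k => T (cE x k))).
  have := sqFb (PhiF (fun k => T (cE x' k))); rewrite /phi /s in hs *; lra.
have gI : injective g.
  move=> y y' e1; rewrite /g in e1.
  case: (pselect (aa y = aa y')) => ay.
    by apply: psiI; apply: (addrI (aa y)); rewrite e1 ay.
  have := sepE _ _ (aaP y).1 (aaP y').1 ay.
  have e3 : aa y = aa y' + psi y' - psi y by rewrite -e1 addrK.
  rewrite e3 addrAC [aa y' + _]addrC addrK => hs; exfalso; clear e1 e3.
  have := ler_normB (psi y') (psi y); have := sqEb (PhiE (fun k => pre (cF y k))).
  have := sqEb (PhiE (fun k => pre (cF y' k))).
  have -> : eta / (4 * M) = (eta / M) / 4 by rewrite [4 * M]mulrC invfM mulrA.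
  rewrite /psi in hs *; lra.
have fD x : `|f x - T x| <= 2 * L + 2 * xi.
  have -> : f x - T x = (T (bb x) - T x) + phi x by rewrite /f addrAC.
  have := ler_normD (T (bb x) - T x) (phi x).
  have := sqFb (PhiF (fun k => T (cE x k))).
  rewrite distrC; have := (bbP x).2; rewrite /s /eta; lra.
have gD y : `|T (g y) - y| <= 2 * L + 2 * xi.
  have -> : T (g y) - y = (T (g y) - T (aa y)) + (T (aa y) - y) by rewrite addrA subrK.
  have := ler_normD (T (g y) - T (aa y)) (T (aa y) - y).
  have [_ h1] := qi (g y) (aa y).
  have e4 : g y - aa y = psi y by rewrite /g addrC addKr.
  rewrite e4 in h1.
  have h2 : M * `|psi y| <= eta / 4.
    have := ler_wpM2l (ltW M0) (sqEb (PhiE (fun k => pre (cF y k)))).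
    have -> : M * (eta / (4 * M)) = eta / 4.
      by field; rewrite lt0r_neq0.
    by [].
  rewrite (distrC (T (aa y))); have := (aaP y).2; rewrite /psi /s /eta in h1 h2 *; lra.
have [h [hB hP]] := SB _ _ f g fI gI.
have hD x : `|h x - T x| <= 2 * L + 2 * xi.
  case: (hP x) => e1; first by rewrite e1 fD.
  by rewrite -{2}e1 distrC; exact: gD.
have M2 : 1 <= M ^+ 2 by rewrite expr_ge1 // ltW.
have ML : L <= M ^+ 2 * L by rewrite ler_peMl.
exists h; split => //.
  split => //.
    move=> x y; have [q1 q2] := qi x y; have := hD x; have := hD y.
    have t1 := ler_distD (T x) (h x) (h y).
    have t2 := ler_distD (T y) (T x) (h y).
    have t3 := ler_distD (h x) (T x) (T y).
    have t4 := ler_distD (h y) (h x) (T y).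
    rewrite (distrC (T y) (h y)) in t2; rewrite (distrC (T x) (h x)) in t3.
    split; lra.
  exists 1; first exact: ltr01.
  case: hB => hi hK hiK.
  move=> y; exists y; first by exists (hi y) => //; rewrite hiK.
  by rewrite subrr normr0 ler01.
move=> x; apply: le_trans (hD x) _; lra.
Qed.
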